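(* Let $G=(V,E,w)$ be a connected undirected graph with positive edge weights $w:E\to\mathbb{R}_{+}$, let $v\in V$, and let $E_v$ be a set of node pairs $\{u,v\}$ with $u\neq v$ and $\{u,v\}\notin E$ (candidate edges incident to $v$), each $e\in E_v$ having a given positive weight $w(e)$. For $S\subseteq E_v$ let $\mathcal{R}(S)$ denote the resistance distance of $v$ in the augmented graph $G(S)$. Then $\mathcal{R}$ is monotonically decreasing: for any subsets $S\subsetneq T\subseteq E_v$, $$\mathcal{R}(T)<\mathcal{R}(S).$$
   Context: For a connected weighted graph $H$ on node set $V$ with $|V|=n$, its Laplacian is $\mathbf{L}=\mathbf{D}-\mathbf{A}$, where $\mathbf{A}$ is the weighted adjacency matrix and $\mathbf{D}$ the diagonal matrix of weighted degrees; $\mathbf{L}^\dagger$ denotes its Moore–Penrose pseudoinverse. For nodes $a,b$ let $\mathbf{b}_{a,b}=\mathbf{e}_a-\mathbf{e}_b$ (standard basis vectors). The resistance distance between $a$ and $b$ is $\mathcal{R}_{ab}=\mathbf{b}_{a,b}^\top\mathbf{L}^\dagger\mathbf{b}_{a,b}$, and the resistance distance of node $v$ is $\mathcal{R}_v=\sum_{u\in V}\mathcal{R}_{uv}$. For $S\subseteq E_v$, $G(S)=(V,E\cup S,w')$ is the graph obtained by adding the edges of $S$ with their given weights (weights of edges in $E$ unchanged). *)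

(* Defs.v *)
From HB Require Import structures.
From mathcomp Require Import all_boot all_order all_algebra.
From mathcomp Require Import reals.
From Stdlib Require Import ClassicalEpsilon.

Set Implicit Arguments. Unset Strict Implicit. Unset Printing Implicit Defensive.
Import Order.TTheory GRing.Theory Num.Theory.
Local Open Scope ring_scope.

Section Defs.
Variable R : realType.
Variable n : nat.

(* A weighted graph on node set 'I_n is given by its weighted adjacency
   function w : w x y > 0 iff {x,y} is an edge, with weight w x y. *)
Definition weighted_graph (w : 'I_n -> 'I_n -> R) : Prop :=
  (forall x y, w x y = w y x) /\ (forall x y, 0 <= w x y) /\ (forall x, w x x = 0).

Definition edge (w : 'I_n -> 'I_n -> R) : rel 'I_n := fun x y => 0 < w x y.

Definition connected_graph (w : 'I_n -> 'I_n -> R) : Prop :=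
  forall x y, connect (edge w) x y.

Definition adjmx (w : 'I_n -> 'I_n -> R) : 'M[R]_n := \matrix_(i, j) w i j.
Definition degmx (w : 'I_n -> 'I_n -> R) : 'M[R]_n :=
  \matrix_(i, j) (if i == j then \sum_k w i k else 0).
Definition laplacian (w : 'I_n -> 'I_n -> R) : 'M[R]_n := degmx w - adjmx w.

(* Moore--Penrose pseudoinverse: the (unique) matrix satisfying the four
   Penrose equations (real matrices, so adjoint = transpose). *)
Definition penrose (A X : 'M[R]_n) : Prop :=
  [/\ A *m X *m A = A, X *m A *m X = X, (A *m X)^T = A *m X & (X *m A)^T = X *m A].

Definition pinv (A : 'M[R]_n) : 'M[R]_n := epsilon (inhabits 0) (penrose A).

Definition bvec (a b : 'I_n) : 'cV[R]_n := \col_i ((i == a)%:R - (i == b)%:R).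

Definition resistance (w : 'I_n -> 'I_n -> R) (a b : 'I_n) : R :=
  ((bvec a b)^T *m pinv (laplacian w) *m bvec a b) 0 0.

Definition node_resistance (w : 'I_n -> 'I_n -> R) (v : 'I_n) : R :=
  \sum_u resistance w u v.

(* G(S): add the edges {u,v}, u in S, with weight c u *)
Definition augment (w : 'I_n -> 'I_n -> R) (v : 'I_n) (c : 'I_n -> R)
  (S : {set 'I_n}) : 'I_n -> 'I_n -> R :=
  fun x y => w x y + (if (x == v) && (y \in S) then c y
                      else if (y == v) && (x \in S) then c x else 0).

End Defs.

(* Main.v *)
Require Import Defs.
From HB Require Import structures.
From mathcomp Require Import all_boot all_order all_algebra.
From mathcomp Require Import reals ring lra.
From Stdlib Require Import ClassicalEpsilon.
Import Order.TTheory GRing.Theory Num.Theory.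
Local Open Scope ring_scope.
Set Implicit Arguments. Unset Strict Implicit.

Section Aux.
Variable R : realType.
Variable n : nat.
Implicit Types (g : 'I_n -> 'I_n -> R) (x z : 'I_n -> R).

Definition symw g := forall i j, g i j = g j i.
Definition nnw g := forall i j, 0 <= g i j.
Definition lapf g z i := \sum_j g i j * (z i - z j).
Definition Bf g x z := \sum_i \sum_j g i j * ((x i - x j) * (z i - z j)).

Lemma Bf_lap g x z : symw g -> Bf g x z = 2 * \sum_i x i * lapf g z i.
Proof.
move=> sg.
have E : Bf g x z = \sum_i \sum_j g i j * (x i * (z i - z j))
   - \sum_i \sum_j g i j * (x j * (z i - z j)).
  rewrite -sumrB; apply: eq_bigr => i _; rewrite -sumrB; apply: eq_bigr => j _; ring.
have E2 : \sum_i \sum_j g i j * (x j * (z i - z j))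
   = - \sum_i \sum_j g i j * (x i * (z i - z j)).
  rewrite exchange_big /= -sumrN; apply: eq_bigr => i _; rewrite -sumrN.
  apply: eq_bigr => j _; rewrite sg; ring.
have E3 : \sum_i x i * lapf g z i = \sum_i \sum_j g i j * (x i * (z i - z j)).
  apply: eq_bigr => i _; rewrite /lapf mulr_sumr; apply: eq_bigr => j _; ring.
rewrite E E2 E3; ring.
Qed.

Lemma Bf_ge0 g x : nnw g -> 0 <= Bf g x x.
Proof.
move=> ng; apply: sumr_ge0 => i _; apply: sumr_ge0 => j _.
by apply: mulr_ge0 => //; rewrite -expr2 sqr_ge0.
Qed.

Lemma Bf_term g x a b : nnw g -> g a b * (x a - x b) ^+ 2 <= Bf g x x.
Proof.
move=> ng; rewrite /Bf (bigD1 a) //= (bigD1 b) //= -expr2 -addrA lerDl.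
apply: addr_ge0; apply: sumr_ge0 => i _; last apply: sumr_ge0 => j _;
  by apply: mulr_ge0 => //; rewrite -expr2 sqr_ge0.
Qed.

Lemma const_of_B0 g x : nnw g -> connected_graph g -> Bf g x x = 0 ->
  forall i j, x i = x j.
Proof.
move=> ng cg B0.
have H : forall i j, 0 < g i j -> x i = x j.
  move=> i j gij.
  have t0 : forall k l, 0 <= g k l * ((x k - x l) * (x k - x l)).
    by move=> k l; apply: mulr_ge0 => //; rewrite -expr2 sqr_ge0.
  have h1 := psumr_eq0P (fun k _ => sumr_ge0 _ (fun l _ => t0 k l)) B0 (i:=i) isT.
  have h2 := psumr_eq0P (fun l _ => t0 i l) h1 (i:=j) isT.
  move: h2; rewrite -expr2 => /eqP; rewrite mulf_eq0 (gt_eqF gij) /= sqrf_eq0 subr_eq0.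
  by move/eqP.
move=> i j; have /connectP [p pth ->] := cg i j.
elim: p i pth => [|k p IH] i //= /andP [e pth].
by rewrite (H _ _ e) (IH _ pth).
Qed.


Lemma lap_mul g (z : 'cV[R]_n) i :
  (laplacian g *m z) i 0 = lapf g (fun k => z k 0) i.
Proof.
rewrite /laplacian mulmxBl !mxE /lapf.
under eq_bigr do rewrite mxE.
have -> : \sum_k (if i == k then \sum_l g i l else 0) * z k 0 = (\sum_l g i l) * z i 0.
  rewrite (bigD1 i) //= eqxx [X in _ + X]big1 ?addr0 // => k kn.
  by rewrite eq_sym (negbTE kn) mul0r.
under [X in _ - X]eq_bigr do rewrite mxE.
rewrite mulr_suml -sumrB; apply: eq_bigr => k _; ring.
Qed.

Lemma lap_sym g : symw g -> forall i j, laplacian g i j = laplacian g j i.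
Proof.
move=> sg i j; rewrite !mxE eq_sym; case: eqP => [->|_] //; by rewrite sg.
Qed.

Lemma lap_tr g : symw g -> (laplacian g)^T = laplacian g.
Proof. by move=> sg; apply/matrixP => i j; rewrite mxE lap_sym. Qed.

Lemma sum_e (z : 'cV[R]_n) a : \sum_i z i 0 * (i == a)%:R = z a 0.
Proof.
rewrite (bigD1 a) //= eqxx mulr1 big1 ?addr0 // => i /negbTE ->; by rewrite mulr0.
Qed.

Lemma res_eq g a b X (z : 'cV[R]_n) : symw g ->
  laplacian g *m X *m laplacian g = laplacian g ->
  laplacian g *m z = bvec R a b ->
  ((bvec R a b)^T *m X *m bvec R a b) 0 0 = z a 0 - z b 0.
Proof.
move=> sg HP Lz; rewrite -Lz trmx_mul lap_tr //.
have -> : z^T *m laplacian g *m X *m (laplacian g *m z)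
   = z^T *m (laplacian g *m X *m laplacian g) *m z by rewrite !mulmxA.
rewrite HP -mulmxA Lz mxE.
under eq_bigr do rewrite !mxE mulrBr.
by rewrite sumrB !sum_e.
Qed.

Definition Kmx : 'M[R]_n := (n%:R)^-1 *: const_mx 1.
Definition Mmx g : 'M[R]_n := laplacian g + Kmx.

Lemma sum_lapf g x : symw g -> \sum_i lapf g x i = 0.
Proof.
move=> sg; have := Bf_lap (fun _ => 1) x sg.
rewrite /Bf big1 => [|i _]; last by rewrite big1 // => j _; rewrite subrr !mul0r mulr0.
under [X in _ = 2 * X]eq_bigr do rewrite mul1r.
move/eqP; rewrite eq_sym mulf_eq0 pnatr_eq0 /= => /eqP //.
Qed.

Lemma M_mul g (z : 'cV[R]_n) i :
  (Mmx g *m z) i 0 = lapf g (fun k => z k 0) i + (n%:R)^-1 * \sum_k z k 0.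
Proof.
rewrite /Mmx mulmxDl mxE lap_mul; congr (_ + _).
rewrite /Kmx -scalemxAl mxE; congr (_ * _); rewrite mxE.
by apply: eq_bigr => k _; rewrite mxE mul1r.
Qed.

Hypothesis n0 : (0 < n)%N.

Lemma nR0 : (n%:R : R) != 0.
Proof. by rewrite pnatr_eq0 -lt0n. Qed.

Lemma M_eq g (z : 'cV[R]_n) (bb : 'I_n -> R) : symw g ->
  (forall i, (Mmx g *m z) i 0 = bb i) -> \sum_i bb i = 0 ->
  forall i, lapf g (fun k => z k 0) i = bb i.
Proof.
move=> sg Hz sb.
have s0 : \sum_k z k 0 = 0.
  move: sb; under eq_bigr do rewrite -Hz M_mul.
  rewrite big_split /= sum_lapf // add0r sumr_const card_ord => /eqP.
  by rewrite mulrn_eq0 (gtn_eqF n0) /= mulf_eq0 invr_eq0 (negbTE nR0) /= => /eqP.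
by move=> i; rewrite -Hz M_mul s0 mulr0 addr0.
Qed.

Lemma M_unit g : symw g -> nnw g -> connected_graph g -> Mmx g \in unitmx.
Proof.
move=> sg ng cg.
have ker : forall z : 'cV[R]_n, Mmx g *m z = 0 -> z = 0.
  move=> z Mz.
  have h1 : forall i, (Mmx g *m z) i 0 = (fun _ => 0) i by move=> i; rewrite Mz mxE.
  have L0 := M_eq sg h1 (@big1_eq _ _ _ _ _ _).
  have B0 : Bf g (fun k => z k 0) (fun k => z k 0) = 0.
    by rewrite Bf_lap // big1 ?mulr0 // => i _; rewrite L0 mulr0.
  have C := const_of_B0 ng cg B0.
  apply/matrixP => i j; rewrite ord1 mxE.
  have s0 : \sum_k z k 0 = 0.
    have := h1 i; rewrite M_mul L0 add0r.
    by move/eqP; rewrite mulf_eq0 invr_eq0 (negbTE nR0) /= => /eqP.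
  move: s0; under eq_bigr do rewrite (C _ i).
  by rewrite sumr_const card_ord => /eqP; rewrite mulrn_eq0 (gtn_eqF n0) /= => /eqP.
rewrite unitmxE unitfE; apply/negP => /det0P [v vn0 vM].
have MT : (Mmx g)^T = Mmx g.
  rewrite /Mmx linearD /= lap_tr //; congr (_ + _).
  by apply/matrixP => i j; rewrite !mxE.
have : Mmx g *m v^T = 0 by rewrite -MT -trmx_mul vM trmx0.
move/ker => /(congr1 trmx); rewrite trmxK trmx0 => v0.
by rewrite v0 eqxx in vn0.
Qed.


Lemma rowsum g i : \sum_k laplacian g i k = 0.
Proof.
have h := lap_mul g (const_mx 1) i; rewrite mxE in h.
have e : \sum_k laplacian g i k = \sum_j laplacian g i j * (const_mx 1 : 'cV[R]_n) j 0.
  by apply: eq_bigr => k _; rewrite [const_mx _ _ _]mxE mulr1.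
rewrite e h; rewrite /lapf big1 // => k _; by rewrite !mxE subrr mulr0.
Qed.

Lemma penrose_ex g : symw g -> nnw g -> connected_graph g ->
  exists X, penrose (laplacian g) X.
Proof.
move=> sg ng cg.
set L := laplacian g; set K := Kmx; set M := Mmx g.
have Mu : M \in unitmx by apply: M_unit.
set Mi := invmx M.
have LK : L *m K = 0.
  apply/matrixP => i j; rewrite /K /Kmx -scalemxAr !mxE.
  rewrite (eq_bigr (fun k => laplacian g i k)) ?rowsum ?mulr0 // => k _.
  by rewrite [const_mx _ _ _]mxE mulr1.
have KL : K *m L = 0.
  apply/matrixP => i j; rewrite /K /Kmx -scalemxAl !mxE.
  rewrite (eq_bigr (fun k => laplacian g j k)) ?rowsum ?mulr0 // => k _.
  by rewrite [const_mx _ _ _]mxE mul1r lap_sym.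
have KK : K *m K = K.
  rewrite /K /Kmx -scalemxAl -scalemxAr scalerA.
  have -> : (const_mx 1 : 'M[R]_n) *m (const_mx 1 : 'M[R]_n) = n%:R *: (const_mx 1 : 'M[R]_n).
    apply/matrixP => i j; rewrite !mxE.
    under eq_bigr do rewrite !mxE mulr1.
    by rewrite sumr_const card_ord mulr1.
  by rewrite scalerA mulfVK ?nR0.
have KT : K^T = K by apply/matrixP => i j; rewrite !mxE.
have LM : L = M - K by rewrite /M /Mmx addrK.
have KM : K *m M = K by rewrite /M /Mmx mulmxDr KL KK add0r.
have MK : M *m K = K by rewrite /M /Mmx mulmxDl LK KK add0r.
have KMi : K *m Mi = K by rewrite -{1}KM -mulmxA mulmxV // mulmx1.
have MiK : Mi *m K = K by rewrite -{1}MK mulmxA mulVmx // mul1mx.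
have LX : L *m (Mi - K) = 1%:M - K.
  by rewrite mulmxBr LK subr0 LM mulmxBl mulmxV // KMi.
have XL : (Mi - K) *m L = 1%:M - K.
  by rewrite mulmxBl KL subr0 LM mulmxBr mulVmx // MiK.
exists (Mi - K); split.
- by rewrite LX mulmxBl mul1mx KL subr0.
- by rewrite XL mulmxBl mul1mx mulmxBr KMi KK subrr subr0.
- by rewrite LX linearB /= trmx1 KT.
- by rewrite XL linearB /= trmx1 KT.
Qed.

Lemma pot_ex g a b : symw g -> nnw g -> connected_graph g ->
  exists z : 'cV[R]_n, laplacian g *m z = bvec R a b.
Proof.
move=> sg ng cg.
have Mu := M_unit sg ng cg.
exists (invmx (Mmx g) *m bvec R a b).
have H : forall i, (Mmx g *m (invmx (Mmx g) *m bvec R a b)) i 0 = bvec R a b i 0.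
  by move=> i; rewrite mulmxA mulmxV // mul1mx.
have sb : \sum_i bvec R a b i 0 = 0.
  under eq_bigr do rewrite mxE.
  rewrite sumrB.
  rewrite (bigD1 a) //= eqxx big1 ?addr0; last by move=> i /negbTE ->.
  rewrite (bigD1 b) //= eqxx big1 ?addr0 ?subrr //; by move=> i /negbTE ->.
have := M_eq sg H sb.
move=> E; apply/matrixP => i j; by rewrite ord1 lap_mul E.
Qed.

Lemma res_val g a b (z : 'cV[R]_n) : symw g -> nnw g -> connected_graph g ->
  laplacian g *m z = bvec R a b -> resistance g a b = z a 0 - z b 0.
Proof.
move=> sg ng cg Lz; rewrite /resistance /pinv.
have [P1 _ _ _] := epsilon_spec (inhabits 0) (penrose (laplacian g)) (penrose_ex sg ng cg).
exact: res_eq sg P1 Lz.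
Qed.


Definition bvf (a b : 'I_n) (i : 'I_n) : R := (i == a)%:R - (i == b)%:R.

Lemma sbv x a b : \sum_i x i * bvf a b i = x a - x b.
Proof.
rewrite /bvf; under eq_bigr do rewrite mulrBr.
rewrite sumrB (bigD1 a) //= eqxx mulr1 big1 ?addr0; last by move=> i /negbTE ->; rewrite mulr0.
rewrite (bigD1 b) //= eqxx mulr1 big1 ?addr0 //; by move=> i /negbTE ->; rewrite mulr0.
Qed.

Lemma Bf_pot g x a b : symw g -> (forall i, lapf g x i = bvf a b i) ->
  Bf g x x = 2 * (x a - x b).
Proof. by move=> sg H; rewrite Bf_lap //; under eq_bigr do rewrite H; rewrite sbv. Qed.

Lemma cmp_core g g' a b y z : symw g -> symw g' -> nnw g ->
  (forall i j, g i j <= g' i j) ->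
  (forall i, lapf g y i = bvf a b i) -> (forall i, lapf g' z i = bvf a b i) ->
  (g' a b - g a b) * (z a - z b) ^+ 2 <= 2 * ((y a - y b) - (z a - z b)).
Proof.
move=> sg sg' ng hle Hy Hz.
have Byy := Bf_pot sg Hy.
have Bzz' := Bf_pot sg' Hz.
have Bzy : Bf g z y = 2 * (z a - z b).
  by rewrite Bf_lap //; under eq_bigr do rewrite Hy; rewrite sbv.
have Exp : Bf g (fun i => y i - z i) (fun i => y i - z i)
    = Bf g y y - 2 * Bf g z y + Bf g z z.
  rewrite /Bf mulr_sumr -sumrB -big_split; apply: eq_bigr => i _.
  rewrite mulr_sumr -sumrB -big_split; apply: eq_bigr => j _ /=; ring.
have D : Bf g' z z - Bf g z z = Bf (fun i j => g' i j - g i j) z z.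
  rewrite /Bf -sumrB; apply: eq_bigr => i _; rewrite -sumrB; apply: eq_bigr => j _; ring.
have nd : nnw (fun i j => g' i j - g i j) by move=> i j; rewrite subr_ge0.
have Dt := Bf_term z a b nd.
have P := Bf_ge0 (fun i => y i - z i) ng.
rewrite -D in Dt; rewrite Exp in P.
move: Dt P; rewrite Byy Bzz' Bzy.
set t := (_ * _ ^+ 2); set u := Bf g z z.
move=> Dt P; lra.
Qed.

Lemma res_cmp g g' a b : symw g -> symw g' -> nnw g -> connected_graph g ->
  (forall i j, g i j <= g' i j) ->
  resistance g' a b <= resistance g a b /\
  (a != b -> 0 < g' a b - g a b -> resistance g' a b < resistance g a b).
Proof.
move=> sg sg' ng cg hle.
have ng' : nnw g' by move=> i j; exact: le_trans (ng i j) (hle i j).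
have cg' : connected_graph g'.
  move=> x y; apply: (connect_sub _ (cg x y)) => p q e; apply: connect1.
  rewrite /edge in e *; exact: lt_le_trans e (hle p q).
have [y Ly] := pot_ex a b sg ng cg.
have [z Lz] := pot_ex a b sg' ng' cg'.
rewrite (res_val sg ng cg Ly) (res_val sg' ng' cg' Lz).
have Hy : forall i, lapf g (fun k => y k 0) i = bvf a b i.
  by move=> i; rewrite -lap_mul Ly mxE.
have Hz : forall i, lapf g' (fun k => z k 0) i = bvf a b i.
  by move=> i; rewrite -lap_mul Lz mxE.
have key := cmp_core sg sg' ng hle Hy Hz.
have Bz := Bf_pot sg' Hz.
have Rz0 : 0 <= z a 0 - z b 0.
  have := Bf_ge0 (fun k => z k 0) ng'; rewrite Bz pmulr_rge0 //.
have dl : 0 <= g' a b - g a b by rewrite subr_ge0.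
split.
  have : 0 <= (g' a b - g a b) * (z a 0 - z b 0) ^+ 2 by rewrite mulr_ge0 // sqr_ge0.
  move: key; set t := (_ * _ ^+ 2) => key tt; lra.
move=> ab dp.
have Rzp : 0 < z a 0 - z b 0.
  rewrite lt_neqAle Rz0 andbT eq_sym; apply/negP => /eqP R0.
  have B0 : Bf g' (fun k => z k 0) (fun k => z k 0) = 0.
    by rewrite Bz R0 mulr0.
  have C := const_of_B0 ng' cg' B0.
  have := Hz a; rewrite /lapf big1 => [|j _]; last by rewrite (C a j) subrr mulr0.
  by rewrite /bvf eqxx (negbTE ab) subr0 => /eqP; rewrite eq_sym oner_eq0.
have : 0 < (g' a b - g a b) * (z a 0 - z b 0) ^+ 2 by rewrite mulr_gt0 // exprn_gt0.
move: key; set t := (_ * _ ^+ 2) => key tt; lra.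
Qed.

End Aux.

Section Aug.
Variable R : realType.
Variable n : nat.
Variables (w : 'I_n -> 'I_n -> R) (v : 'I_n) (c : 'I_n -> R).
Implicit Types S T : {set 'I_n}.

Lemma aug_sym S : symw w -> symw (augment w v c S).
Proof.
move=> sw x y; rewrite /augment sw.
case: (eqVneq x v) => [->|xv]; case: (eqVneq y v) => [->|yv] //=;
  by rewrite ?eqxx ?(negbTE xv) ?(negbTE yv) /= ?if_same.
Qed.

Lemma aug_ext_ge0 S x y : (forall u, u \in S -> 0 <= c u) ->
  0 <= (if (x == v) && (y \in S) then c y
        else if (y == v) && (x \in S) then c x else 0).
Proof.
move=> hc; case: ifP => [/andP [_ h]|_]; first exact: hc.
case: ifP => [/andP [_ h]|_] //; exact: hc.
Qed.

Lemma aug_ge S x y : (forall u, u \in S -> 0 <= c u) -> w x y <= augment w v c S x y.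
Proof. by move=> hc; rewrite /augment lerDl aug_ext_ge0. Qed.

Lemma aug_nn S : nnw w -> (forall u, u \in S -> 0 <= c u) -> nnw (augment w v c S).
Proof. by move=> nw hc x y; exact: le_trans (nw x y) (aug_ge x y hc). Qed.

Lemma aug_mono S T x y : S \subset T -> (forall u, u \in T -> u != v /\ 0 <= c u) ->
  augment w v c S x y <= augment w v c T x y.
Proof.
move=> sST hT; rewrite /augment lerD2l.
have vT : v \notin T by apply/negP => /hT [/eqP]. 
have vS : v \notin S by apply/negP => /(subsetP sST); apply/negP.
have hcT : forall u, u \in T -> 0 <= c u by move=> u /hT [].
case: (eqVneq x v) => [->|xv] /=.
  rewrite (negbTE vS) (negbTE vT) !andbF.
  case: ifP => yS; first by rewrite (subsetP sST _ yS).
  by case: ifP => // yT; exact: hcT.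
rewrite /=.
case: ifP => [/andP [yv xS]|_]; first by rewrite yv (subsetP sST _ xS).
case: ifP => // /andP [_ xT]; exact: hcT.
Qed.

Lemma aug_diff S T u : u \in T -> u \notin S -> u != v ->
  augment w v c T u v - augment w v c S u v = c u.
Proof.
move=> uT uS uv; rewrite /augment (negbTE uv) eqxx /= uT (negbTE uS); ring.
Qed.

End Aug.

Theorem theorem1 (R : realType) (n : nat) (w : 'I_n -> 'I_n -> R) (v : 'I_n)
    (Ev : {set 'I_n}) (c : 'I_n -> R) :
  weighted_graph w -> connected_graph w ->
  (forall u, u \in Ev -> [/\ u != v, w u v = 0 & 0 < c u]) ->
  forall S T : {set 'I_n}, S \proper T -> T \subset Ev ->
    node_resistance (augment w v c T) v < node_resistance (augment w v c S) v.
Proof.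
move=> [sw [nw _]] cw hEv S T /properP [sST [u0 u0T u0S]] sTE.
have n0 : (0 < n)%N := leq_ltn_trans (leq0n v) (ltn_ord v).
have hT : forall u, u \in T -> u != v /\ 0 <= c u.
  by move=> u /(subsetP sTE) /hEv [? _ ?]; split=> //; exact: ltW.
have hS : forall u, u \in S -> 0 <= c u by move=> u /(subsetP sST) /hT [].
have hT' : forall u, u \in T -> 0 <= c u by move=> u /hT [].
have sgS : symw (augment w v c S) by apply: aug_sym.
have sgT : symw (augment w v c T) by apply: aug_sym.
have ngS : nnw (augment w v c S) by apply: aug_nn.
have cgS : connected_graph (augment w v c S).
  move=> x y; apply: (connect_sub _ (cw x y)) => p q e; apply: connect1.
  rewrite /edge in e *; exact: lt_le_trans e (aug_ge w v p q hS).
have hle : forall i j, augment w v c S i j <= augment w v c T i j.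
  by move=> i j; apply: aug_mono.
rewrite /node_resistance (bigD1 u0) //= [X in _ < X](bigD1 u0) //=.
apply: ltr_leD.
  have [u0v _] := hT u0 u0T.
  apply: (res_cmp n0 u0 v sgS sgT ngS cgS hle).2 => //.
  rewrite aug_diff //; by case/hEv: (subsetP sTE _ u0T).
apply: ler_sum => u _; exact: (res_cmp n0 u v sgS sgT ngS cgS hle).1.
Qed.
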